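(* Let $X$ be a real inner product space with $\dim X\ge 2$ and inner product $\langle\cdot,\cdot\rangle$. Then there is no function $f\colon X\to\mathbb{R}$ satisfying $f(x+y)=f(x)f(y)-\langle x,y\rangle$ for all $x,y\in X$. *)

(* Defs.v *)
From HB Require Import structures.
From mathcomp Require Import all_boot all_order all_algebra.
From mathcomp Require Import reals.
Set Implicit Arguments. Unset Strict Implicit. Unset Printing Implicit Defensive.
Import Order.TTheory GRing.Theory Num.Theory.
Local Open Scope ring_scope.

Definition is_inner_product (R : realType) (V : lmodType R) (ip : V -> V -> R) : Prop :=
  [/\ (forall x y : V, ip x y = ip y x),
      (forall (a : R) (x y z : V), ip (a *: x + y) z = a * ip x z + ip y z)
    & (forall x : V, x != 0 -> 0 < ip x x)].

Definition dim_ge2 (R : realType) (V : lmodType R) : Prop :=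
  exists x y : V, forall a b : R, a *: x + b *: y = 0 -> a = 0 /\ b = 0.

(* Main.v *)
Require Import Defs.
From HB Require Import structures.
From mathcomp Require Import all_boot all_order all_algebra.
From mathcomp Require Import reals.
From mathcomp Require Import ring lra.
Import Order.TTheory GRing.Theory Num.Theory.
Local Open Scope ring_scope.

Theorem mainTheorem8 (R : realType) (V : lmodType R) (ip : V -> V -> R)
  (hip : is_inner_product ip) (hdim : dim_ge2 V) :
  ~ (exists f : V -> R, forall x y : V, f (x + y) = f x * f y - ip x y).
Proof.
case: hip => Hs Hl Hp [f Hf].
have ipD : forall x y z, ip (x + y) z = ip x z + ip y z.
  by move=> x y z; rewrite -[x in x + y]scale1r Hl mul1r.
have ipZ : forall a x z, ip (a *: x) z = a * ip x z.
  move=> a x z; have := Hl a x 0 z; rewrite addr0 => ->.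
  have h0 : ip 0 z = 0.
    have := ipD 0 0 z; rewrite addr0 => h; lra.
  by rewrite h0 addr0.
have ip0 : forall x, ip x 0 = 0.
  move=> x; rewrite Hs; have := ipD 0 0 x; rewrite addr0 => h; lra.
case: hdim => u [v Huv].
have u0 : u != 0.
  apply/negP => /eqP hu; have := Huv 1 0; rewrite hu scaler0 scale0r addr0.
  by case=> // /eqP; rewrite oner_eq0.
have uu := Hp u u0.
have f0 : f 0 = 1.
  apply/eqP; apply/negPn/negP => hne.
  have fz : forall x, f x = 0.
    move=> x; have := Hf x 0; rewrite addr0 ip0 subr0 => h.
    have : f x * (1 - f 0) = 0 by rewrite mulrBr mulr1 -h subrr.
    move/eqP; rewrite mulf_eq0 subr_eq0 [1 == _]eq_sym (negbTE hne) orbF => /eqP //.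
  have := Hf u u; rewrite !fz => h; lra.
have key : forall x y z, ip x y * (f z - 1) = ip y z * (f x - 1).
  move=> x y z; have := congr1 f (addrA x y z); rewrite !Hf ipD.
  rewrite (Hs x (y + z)) ipD (Hs y x) (Hs z x) => h.
  have e : ip y z * f x - ip x y * f z = ip y z - ip x y by lra.
  by rewrite !mulrBr !mulr1; lra.
set c := ip u v / ip u u.
set w := (- c) *: u + 1 *: v.
have w0 : w != 0.
  by apply/negP => /eqP /Huv [_] /eqP; rewrite oner_eq0.
have wu : ip w u = 0.
  have hu : ip u u != 0 by rewrite gt_eqF.
  rewrite /w ipD !ipZ mul1r (Hs v u) /c mulNr -mulrA (mulVf hu) mulr1.
  by rewrite addNr.
have fu : f u = 1.
  have := key w w u; rewrite wu mul0r => /eqP; rewrite mulf_eq0 (gt_eqF (Hp w w0)) /=.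
  by rewrite subr_eq0 => /eqP.
have f1 : forall z, f z = 1.
  move=> z; have := key u u z; rewrite fu subrr mulr0 => /eqP.
  by rewrite mulf_eq0 (gt_eqF uu) /= subr_eq0 => /eqP.
have := Hf u u; rewrite !f1 => h; lra.
Qed.
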